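(* Let $G=(V,E)$ be a finite connected directed graph with $(i,j)\in E$ if and only if $(j,i)\in E$, and write $\partial i=\{j\in V:(j,i)\in E\}$. Let $q,q^*:V\to\mathbb{R}$ and let $\phi,\phi^*:E\to\mathbb{R}$ be skew-symmetric ($\phi_{ij}=-\phi_{ji}$, $\phi^*_{ij}=-\phi^*_{ji}$) with $\sum_{j\in\partial i}\phi_{ji}+q_i=0$ and $\sum_{j\in\partial i}\phi^*_{ji}+q^*_i=0$ for all $i\in V$. Let $T\subset V$ be non-empty. If $q_i\ge q_i^*$ for all $i\in V\setminus T$, then for every node $u\in V\setminus T$ there exists a non-intersecting directed path $(i_1,\ldots,i_n)$ in $G$ with $i_1\in T$, $i_n=u$ and $\phi^*_{i_li_{l+1}}\ge\phi_{i_li_{l+1}}$ for all $l=1,\ldots,n-1$. Moreover, if $q_u>q_u^*$, the path can be chosen so that $\phi^*_{i_li_{l+1}}>\phi_{i_li_{l+1}}$ for all $l=1,\ldots,n-1$.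
   Context: A non-intersecting directed path is a sequence of pairwise distinct nodes $(i_1,\ldots,i_n)$ with $(i_l,i_{l+1})\in E$ for each $l$. *)

(* Defs.v *)
From HB Require Import structures.
From mathcomp Require Import all_boot all_order all_algebra.
Set Implicit Arguments. Unset Strict Implicit. Unset Printing Implicit Defensive.
Import Order.TTheory GRing.Theory Num.Theory.
Local Open Scope ring_scope.

(* A non-intersecting directed path
   (i_1, ..., i_n) is represented as i_1 :: p with
   - uniq (i_1 :: p)            (pairwise distinct nodes),
   - path E' i_1 p              (consecutive pairs satisfy E'),
   where E' additionally encodes the comparison condition on the flows. *)

Definition ni_path_from_to (V : finType) (E : rel V) (cond : rel V)
    (T : {set V}) (u : V) : Prop :=
  exists (i1 : V) (p : seq V),
    [/\ i1 \in T, uniq (i1 :: p), last i1 p = u &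
        path (fun a b => E a b && cond a b) i1 p].

(* Main.v *)
Require Import Defs.
From Stdlib Require Classical_Prop.
From HB Require Import structures.
From mathcomp Require Import all_boot all_order all_algebra.
Import Order.TTheory GRing.Theory Num.Theory.
Local Open Scope ring_scope.

Section Aux.
Variables (R : realFieldType) (V : finType) (E : rel V).
Hypothesis Esym : forall i j, E i j = E j i.

Lemma cut_sum (psi : V -> V -> R)
  (skew : forall i j, E i j -> psi i j = - psi j i) (U : {set V}) :
  \sum_(i in U) \sum_(j | E j i) psi j i =
  \sum_(i in U) \sum_(j | E j i && (j \notin U)) psi j i.
Proof.
have A0 : \sum_(i in U) \sum_(j | E j i && (j \in U)) psi j i = 0.
  set A := (X in X = 0).
  have h : A = \sum_i \sum_j (if [&& i \in U, j \in U & E j i] then psi j i else 0).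
    rewrite /A big_mkcond /=; apply: eq_bigr => i _.
    case: (boolP (i \in U)) => iU /=.
      rewrite big_mkcond /=; apply: eq_bigr => j _.
      by rewrite andbC.
    by rewrite big1.
  have h2 : A = - A.
    rewrite {1}h exchange_big /= h -sumrN; apply: eq_bigr => i _.
    rewrite -sumrN; apply: eq_bigr => j _.
    case: (boolP [&& j \in U, i \in U & E i j]) => /and3P.
      move=> [-> -> Eij] /=; rewrite -Esym Eij /=.
      by rewrite (skew _ _ Eij).
    move=> H; case: ifP; last by rewrite oppr0.
    move=> /and3P [a b c]; exfalso; apply: H; split => //.
    by rewrite Esym.
  have : A *+ 2 = 0 by rewrite mulr2n {2}h2 subrr.
  by move/eqP; rewrite mulrn_eq0 /= => /eqP.
rewrite -[RHS]add0r.
have -> : (0:R) + \sum_(i in U) \sum_(j | E j i && (j \notin U)) psi j i =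
  \sum_(i in U) \sum_(j | E j i && (j \in U)) psi j i +
  \sum_(i in U) \sum_(j | E j i && (j \notin U)) psi j i by rewrite A0.
rewrite -big_split /=; apply: eq_bigr => i _.
by rewrite (bigID (fun j => j \in U)).
Qed.

Lemma reach_cut (psi : V -> V -> R) (d : V -> R)
  (skew : forall i j, E i j -> psi i j = - psi j i)
  (bal : forall i, \sum_(j | E j i) psi j i = d i)
  (T : {set V}) (cond : rel V) (u : V) :
  ~ ni_path_from_to E cond T u ->
  exists U : {set V}, [/\ u \in U, forall i, i \in U -> i \notin T,
     forall i j, i \in U -> j \notin U -> E j i -> ~~ cond j i &
     \sum_(i in U) d i = \sum_(i in U) \sum_(j | E j i && (j \notin U)) psi j i].
Proof.
move=> nP.
set e := fun a b => E a b && cond a b.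
set S := [set v | [exists t in T, connect e t v]].
exists (~: S); split.
- rewrite !inE; apply/negP => /existsP [t /andP [tT /connectP [p pth lst]]].
  apply: nP; move: lst; case: (shortenP pth) => p' pth' up' _ lst.
  by exists t, p'; split.
- move=> i; rewrite !inE => /negP H; apply/negP => iT; apply: H.
  by apply/existsP; exists i; rewrite iT connect0.
- move=> i j; rewrite in_setC inE => /negP H; rewrite in_setC negbK inE.
  move=> /existsP [t /andP [tT ctj]] Eji.
  apply/negP => cji; apply: H; apply/existsP; exists t; rewrite tT /=.
  by apply: connect_trans ctj (connect1 _); rewrite /e Eji cji.
- rewrite -cut_sum //; apply: eq_bigr => i _; by rewrite bal.
Qed.

End Aux.

Theorem theorem3 (R : realFieldType) (V : finType) (E : rel V)
  (Esym : forall i j, E i j = E j i)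
  (Econn : forall i j, connect E i j)
  (q qs : V -> R) (phi phis : V -> V -> R)
  (phi_skew : forall i j, E i j -> phi i j = - phi j i)
  (phis_skew : forall i j, E i j -> phis i j = - phis j i)
  (phi_bal : forall i, \sum_(j | E j i) phi j i + q i = 0)
  (phis_bal : forall i, \sum_(j | E j i) phis j i + qs i = 0)
  (T : {set V}) (T_nonempty : T != set0)
  (hq : forall i, i \notin T -> qs i <= q i) :
  forall u, u \notin T ->
    ni_path_from_to E (fun a b => phi a b <= phis a b) T u /\
    (qs u < q u -> ni_path_from_to E (fun a b => phi a b < phis a b) T u).
Proof.
move=> u uT.
set psi := fun a b => phis a b - phi a b.
have skew : forall i j, E i j -> psi i j = - psi j i.
  by move=> i j Eij; rewrite /psi (phi_skew _ _ Eij) (phis_skew _ _ Eij) opprB opprK addrC.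
have bal : forall i, \sum_(j | E j i) psi j i = q i - qs i.
  move=> i; rewrite /psi sumrB.
  have h1 := phi_bal i; have h2 := phis_bal i.
  have e1 : \sum_(j | E j i) phi j i = - q i by apply/eqP; rewrite -addr_eq0 h1.
  have e2 : \sum_(j | E j i) phis j i = - qs i by apply/eqP; rewrite -addr_eq0 h2.
  by rewrite e1 e2 opprK addrC.
have dpos : forall U : {set V}, (forall i, i \in U -> i \notin T) ->
    0 <= \sum_(i in U) (q i - qs i).
  move=> U H; apply: sumr_ge0 => i iU; rewrite subr_ge0; exact: hq (H _ iU).
split.
- apply: Classical_Prop.NNPP => nP.
  have [U [uU UT bnd heq]] := @reach_cut R V E Esym psi _ skew bal T _ u nP.
  have hle : \sum_(i in U) \sum_(j | E j i && (j \notin U)) psi j i <= 0.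
    apply: sumr_le0 => i iU; apply: sumr_le0 => j /andP [Eji jU].
    have := bnd _ _ iU jU Eji; rewrite -ltNge /psi /= subr_le0 => /ltW //.
  have [t tT] : exists t, t \in T.
    by case/set0Pn: T_nonempty => t tT; exists t.
  have tU : t \notin U by apply/negP => /UT; rewrite tT.
  have : [exists j, exists i, [&& j \notin U, i \in U & E j i]].
    apply: Classical_Prop.NNPP => /negP /existsPn H.
    have cl : closed E (mem (~: U)).
      move=> x y Exy; rewrite !in_setC.
      case xU: (x \in U); case yU: (y \in U) => //=.
        by have := H y; move/existsPn/(_ x); rewrite yU xU -Esym Exy.
      by have := H x; move/existsPn/(_ y); rewrite xU yU Exy.
    have := closed_connect cl (Econn t u).
    by rewrite !in_setC tU uU.
  move=> /existsP [j /existsP [i /and3P [jU iU Eji]]].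
  have hlt : \sum_(i in U) \sum_(j | E j i && (j \notin U)) psi j i < 0.
    rewrite (bigD1 i) //= -[X in _ < X](addr0 0); apply: ltr_leD.
      rewrite (bigD1 j) /=; last by rewrite Eji jU.
      rewrite -[X in _ < X](addr0 0); apply: ltr_leD.
        by have := bnd _ _ iU jU Eji; rewrite -ltNge /psi /= subr_lt0.
      apply: sumr_le0 => k /andP [/andP [Eki kU] _].
      have := bnd _ _ iU kU Eki; rewrite -ltNge /psi /= subr_le0 => /ltW //.
    apply: sumr_le0 => k /andP [kU _].
    apply: sumr_le0 => l /andP [Elk lU].
    have := bnd _ _ kU lU Elk; rewrite -ltNge /psi /= subr_le0 => /ltW //.
  have := dpos U UT; rewrite heq => h0.
  by have := lt_le_trans hlt h0; rewrite ltxx.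
- move=> qu; apply: Classical_Prop.NNPP => nP.
  have [U [uU UT bnd heq]] := @reach_cut R V E Esym psi _ skew bal T _ u nP.
  have hle : \sum_(i in U) \sum_(j | E j i && (j \notin U)) psi j i <= 0.
    apply: sumr_le0 => i iU; apply: sumr_le0 => j /andP [Eji jU].
    have := bnd _ _ iU jU Eji; rewrite -leNgt /psi /= subr_le0 //.
  have hgt : 0 < \sum_(i in U) (q i - qs i).
    rewrite (bigD1 u) //=; apply: ltr_pwDl; first by rewrite subr_gt0.
    apply: sumr_ge0 => i /andP [iU _]; rewrite subr_ge0; exact: hq (UT _ iU).
  by have := hgt; rewrite heq => /lt_le_trans /(_ hle); rewrite ltxx.
Qed.
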